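(* Let $G$ be a countable graph. Suppose that some connected component $H$ of $G$ has infinitely many pairwise non-isomorphic connected graphs equimorphic to $H$. Then $G$ has infinitely many pairwise non-isomorphic siblings, and if $G$ has at least two connected components, then infinitely many pairwise non-isomorphic siblings of $G$ are disconnected.
   Context: Graphs are undirected and loopless. $G$ embeds into $G'$ if $G$ is isomorphic to an induced subgraph of $G'$; $G,G'$ are equimorphic if each embeds into the other; a sibling of $G$ is a graph equimorphic to $G$. *)

(* Defs.v *)
From Stdlib Require Import Relations.

Record Graph : Type := MkGraph {
  vert : Type;
  adj : vert -> vert -> Prop;
  adj_sym : forall x y, adj x y -> adj y x;
  adj_irrefl : forall x, ~ adj x x
}.

Definition countable_graph (G : Graph) : Prop :=
  exists f : vert G -> nat, forall x y, f x = f y -> x = y.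

Definition isomorphic (G G' : Graph) : Prop :=
  exists (f : vert G -> vert G') (g : vert G' -> vert G),
    (forall x, g (f x) = x) /\ (forall y, f (g y) = y) /\
    (forall x y, adj G x y <-> adj G' (f x) (f y)).

(* G embeds into G': G is isomorphic to an induced subgraph of G',
   i.e. there is an injective map preserving adjacency and non-adjacency. *)
Definition embeds (G G' : Graph) : Prop :=
  exists f : vert G -> vert G',
    (forall x y, f x = f y -> x = y) /\
    (forall x y, adj G x y <-> adj G' (f x) (f y)).

Definition equimorphic (G G' : Graph) : Prop := embeds G G' /\ embeds G' G.

Definition sibling (G' G : Graph) : Prop := equimorphic G' G.

Definition reach (G : Graph) : vert G -> vert G -> Prop :=
  clos_refl_trans (vert G) (adj G).

Definition connected (G : Graph) : Prop :=
  inhabited (vert G) /\ forall x y : vert G, reach G x y.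

Definition induced (G : Graph) (C : vert G -> Prop) : Graph :=
  MkGraph {x : vert G | C x}
    (fun x y => adj G (proj1_sig x) (proj1_sig y))
    (fun x y h => adj_sym G _ _ h)
    (fun x h => adj_irrefl G _ h).

Definition component (G : Graph) (x : vert G) : Graph :=
  induced G (fun y => reach G x y).

Definition at_least_two_components (G : Graph) : Prop :=
  exists x y : vert G, ~ reach G x y.

(* Main.v *)
Require Import Defs.
From Stdlib Require Import Relations Classical ClassicalEpsilon ProofIrrelevance Arith Lia.

Lemma sig_eq {A} {P : A -> Prop} (a b : sig P) : proj1_sig a = proj1_sig b -> a = b.
Proof. destruct a as [a pa], b as [b pb]; simpl; intros ->. f_equal. apply proof_irrelevance. Qed.

Lemma choice_fun {A B} (R : A -> B -> Prop) : (forall a, exists b, R a b) -> exists g : A -> B, forall a, R a (g a).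
Proof. intros H. exists (fun a => proj1_sig (constructive_indefinite_description _ (H a))). intro a. exact (proj2_sig (constructive_indefinite_description _ (H a))). Qed.

Lemma reach_sym G a b : reach G a b -> reach G b a.
Proof. induction 1. apply rt_step, adj_sym; auto. apply rt_refl. eapply rt_trans; eauto. Qed.

Lemma iso_refl G : isomorphic G G.
Proof. exists (fun x => x), (fun x => x). split; [|split]; intros; tauto. Qed.

Lemma iso_sym G H : isomorphic G H -> isomorphic H G.
Proof. intros (f & g & H1 & H2 & H3). exists g, f. split; [auto|split; [auto|]].
  intros x y. rewrite H3, !H2. tauto. Qed.

Lemma iso_trans G H K : isomorphic G H -> isomorphic H K -> isomorphic G K.
Proof. intros (f & g & H1 & H2 & H3) (f' & g' & H1' & H2' & H3').
  exists (fun x => f' (f x)), (fun z => g (g' z)). split; [|split].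
  - intro x. rewrite H1'. apply H1.
  - intro z. rewrite H2. apply H2'.
  - intros x y. rewrite H3, H3'. tauto. Qed.

Lemma embeds_of_iso G H : isomorphic G H -> embeds G H.
Proof. intros (f & g & H1 & H2 & H3). exists f. split; auto.
  intros x y E. rewrite <- (H1 x), <- (H1 y), E. reflexivity. Qed.

Lemma embeds_trans G H K : embeds G H -> embeds H K -> embeds G K.
Proof. intros (f & Hi & Ha) (f' & Hi' & Ha'). exists (fun x => f' (f x)). split.
  - intros x y E. apply Hi, Hi', E.
  - intros x y. rewrite Ha, Ha'. tauto. Qed.

Lemma equi_of_iso G H : isomorphic G H -> equimorphic G H.
Proof. intros I. split; apply embeds_of_iso; auto using iso_sym. Qed.

Lemma equi_sym G H : equimorphic G H -> equimorphic H G.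
Proof. intros [A B]; split; auto. Qed.

Lemma equi_trans G H K : equimorphic G H -> equimorphic H K -> equimorphic G K.
Proof. intros [A B] [C D]; split; eapply embeds_trans; eauto. Qed.

Lemma reach_map G H (f : vert G -> vert H) : (forall x y, adj G x y -> adj H (f x) (f y)) -> forall a b, reach G a b -> reach H (f a) (f b).
Proof. intros Hf a b; induction 1; [apply rt_step; auto | apply rt_refl | eapply rt_trans; eauto]. Qed.

Lemma iso_component G H v (f : vert G -> vert H) g : (forall x, g (f x) = x) -> (forall y, f (g y) = y) -> (forall x y, adj G x y <-> adj H (f x) (f y)) -> isomorphic (component G v) (component H (f v)).
Proof.
  intros H1 H2 H3.
  assert (Hf : forall x y, adj G x y -> adj H (f x) (f y)) by (intros; apply H3; auto).
  assert (Hg : forall x y, adj H x y -> adj G (g x) (g y)) by (intros x y Hxy; apply H3; rewrite !H2; auto).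
  assert (Hr : forall z, reach H (f v) z -> reach G v (g z)).
  { intros z Hz. rewrite <- (H1 v). apply reach_map; auto. }
  exists (fun y : {y | reach G v y} => exist (fun z => reach H (f v) z) (f (proj1_sig y)) (reach_map G H f Hf v _ (proj2_sig y))),
         (fun z : {z | reach H (f v) z} => exist (fun y => reach G v y) (g (proj1_sig z)) (Hr _ (proj2_sig z))).
  split; [|split].
  - intro x. apply sig_eq. simpl. apply H1.
  - intro x. apply sig_eq. simpl. apply H2.
  - intros x y. simpl. apply H3.
Qed.

Definition hasComp (X G : Graph) := exists v, isomorphic (component G v) X.

Lemma hasComp_iso X G H : isomorphic G H -> hasComp X G -> hasComp X H.
Proof. intros I [v Hv]. pose proof I as (f & g & H1 & H2 & H3). exists (f v).
  eapply iso_trans; [apply iso_sym, (iso_component G H v f g H1 H2 H3)| exact Hv]. Qed.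

Lemma comp_reach_iso G u v : reach G u v -> isomorphic (component G u) (component G v).
Proof. intros Huv.
  exists (fun y : {y | reach G u y} => exist (fun z => reach G v z) (proj1_sig y) (rt_trans _ _ _ _ _ (reach_sym _ _ _ Huv) (proj2_sig y))),
         (fun y : {y | reach G v y} => exist (fun z => reach G u z) (proj1_sig y) (rt_trans _ _ _ _ _ Huv (proj2_sig y))).
  split; [|split]; intros; try (apply sig_eq; reflexivity); simpl; tauto. Qed.

Lemma comp_all G x : (forall a b, reach G a b) -> isomorphic (component G x) G.
Proof. intros Hall.
  exists (fun y : {y | reach G x y} => proj1_sig y), (fun y => exist (fun z => reach G x z) y (Hall x y)).
  split; [|split]; intros; try (apply sig_eq; reflexivity); try reflexivity; simpl; tauto. Qed.

Definition isrep (G : Graph) (f : vert G -> nat) (r : vert G) := forall y, reach G r y -> f r <= f y.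

Definition RV (G : Graph) (f : vert G -> nat) (P : vert G -> Prop) (X : Graph) : Type :=
  ({v : vert G | ~ P v} + {p : vert G * vert X | P (fst p) /\ isrep G f (fst p)})%type.

Definition radj G f P X (a b : RV G f P X) : Prop :=
  match a, b with
  | inl u, inl v => adj G (proj1_sig u) (proj1_sig v)
  | inr p, inr q => fst (proj1_sig p) = fst (proj1_sig q) /\ adj X (snd (proj1_sig p)) (snd (proj1_sig q))
  | _, _ => False
  end.

Lemma radj_sym G f P X (a b : RV G f P X) : radj G f P X a b -> radj G f P X b a.
Proof. destruct a, b; simpl; try tauto. apply adj_sym. intros [E A]; split; auto using adj_sym. Qed.

Lemma radj_irrefl G f P X (a : RV G f P X) : ~ radj G f P X a a.
Proof. destruct a; simpl. apply adj_irrefl. intros [_ A]; exact (adj_irrefl _ _ A). Qed.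

Definition Repl G f P X : Graph := MkGraph (RV G f P X) (radj G f P X) (radj_sym G f P X) (radj_irrefl G f P X).

Lemma repl_reach_inl G f P X a z : reach (Repl G f P X) a z -> forall u, a = inl u -> exists v, z = inl v /\ reach G (proj1_sig u) (proj1_sig v).
Proof.
  unfold reach. intros H. apply clos_rt_rt1n in H. induction H; intros u Hu.
  - exists u; subst; split; [reflexivity| apply rt_refl].
  - subst x. destruct y as [v|q]; simpl in H; [|destruct H].
    destruct (IHclos_refl_trans_1n v eq_refl) as [w [-> Hw]]. exists w. split; auto.
    eapply rt_trans; [apply rt_step; exact H | exact Hw].
Qed.

Lemma repl_reach_inr G f P X a z : reach (Repl G f P X) a z -> forall q, a = inr q -> exists q', z = inr q' /\ fst (proj1_sig q') = fst (proj1_sig q).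
Proof.
  unfold reach. intros H. apply clos_rt_rt1n in H. induction H; intros q Hq.
  - exists q; subst; split; reflexivity.
  - subst x. destruct y as [v|q1]; simpl in H; [destruct H|].
    destruct (IHclos_refl_trans_1n q1 eq_refl) as [w [-> Hw]]. exists w. split; auto.
    rewrite Hw. symmetry. apply H.
Qed.

Lemma repl_reach_inl_back G f P X (Hinv : forall u v, reach G u v -> P u -> P v) (u : {v : vert G | ~ P v}) y (hy : ~ P y) :
  reach G (proj1_sig u) y -> reach (Repl G f P X) (inl u) (inl (exist _ y hy)).
Proof.
  intros H. apply clos_rt_rtn1 in H. revert hy. induction H; intros hy.
  - replace (exist _ (proj1_sig u) hy) with u by (apply sig_eq; reflexivity). apply rt_refl.
  - assert (hy' : ~ P y). { intro Py. apply hy. exact (Hinv y z (rt_step _ _ _ _ H) Py). }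
    eapply rt_trans; [apply (IHclos_refl_trans_n1 hy')|]. apply rt_step. simpl. exact H.
Qed.

Lemma repl_reach_inr_back G f P X r (hr : P r /\ isrep G f r) w w' :
  reach X w w' -> reach (Repl G f P X) (inr (exist (fun p => P (fst p) /\ isrep G f (fst p)) (r,w) hr)) (inr (exist (fun p => P (fst p) /\ isrep G f (fst p)) (r,w') hr)).
Proof.
  induction 1.
  - apply rt_step. simpl. split; auto.
  - apply rt_refl.
  - eapply rt_trans; eauto.
Qed.

Definition piG {G f P X} (z : RV G f P X) : vert G := match z with inl v => proj1_sig v | inr q => fst (proj1_sig q) end.

Lemma comp_inl G f P X (Hinv : forall u v, reach G u v -> P u -> P v) (u : {v : vert G | ~ P v}) :
  isomorphic (component (Repl G f P X) (inl u)) (component G (proj1_sig u)).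
Proof.
  assert (H1 : forall z, reach (Repl G f P X) (inl u) z -> reach G (proj1_sig u) (piG z)).
  { intros z Hz. destruct (repl_reach_inl _ _ _ _ _ _ Hz u eq_refl) as [v [-> Hv]]. exact Hv. }
  assert (np : forall y, reach G (proj1_sig u) y -> ~ P y).
  { intros y Hy Py. apply (proj2_sig u). exact (Hinv y _ (reach_sym _ _ _ Hy) Py). }
  exists (fun z : {z | reach (Repl G f P X) (inl u) z} => exist (fun y => reach G (proj1_sig u) y) (piG (proj1_sig z)) (H1 _ (proj2_sig z))),
    (fun y : {y | reach G (proj1_sig u) y} => exist (fun z => reach (Repl G f P X) (inl u) z)
        (inl (exist _ (proj1_sig y) (np _ (proj2_sig y))))
        (repl_reach_inl_back G f P X Hinv u _ _ (proj2_sig y))).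
  split; [|split].
  - intros [z hz]. apply sig_eq. simpl.
    destruct (repl_reach_inl _ _ _ _ _ _ hz u eq_refl) as [v [-> Hv]]. simpl. f_equal. apply sig_eq. reflexivity.
  - intros [y hy]. apply sig_eq. reflexivity.
  - intros [a ha] [b hb]. simpl.
    destruct (repl_reach_inl _ _ _ _ _ _ ha u eq_refl) as [v [-> Hv]].
    destruct (repl_reach_inl _ _ _ _ _ _ hb u eq_refl) as [w [-> Hw]]. simpl. tauto.
Qed.

Lemma comp_inr G f P X (Xc : connected X) q :
  isomorphic (component (Repl G f P X) (inr q)) X.
Proof.
  destruct q as [[r w0] hr].
  pose (sx := fun z : RV G f P X => match z with inr q => snd (proj1_sig q) | inl _ => w0 end).
  exists (fun z : {z | reach (Repl G f P X) (inr (exist _ (r,w0) hr)) z} => sx (proj1_sig z)),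
    (fun w => exist (fun z => reach (Repl G f P X) (inr (exist _ (r,w0) hr)) z)
        (inr (exist (fun p => P (fst p) /\ isrep G f (fst p)) (r,w) hr))
        (repl_reach_inr_back G f P X r hr w0 w (proj2 Xc w0 w))).
  split; [|split].
  - intros [z hz]. apply sig_eq. simpl.
    destruct (repl_reach_inr _ _ _ _ _ _ hz _ eq_refl) as [[[r' w'] hr'] [-> E]]. simpl in *. subst r'.
    f_equal. apply sig_eq. reflexivity.
  - intros w. reflexivity.
  - intros [a ha] [b hb]. simpl.
    destruct (repl_reach_inr _ _ _ _ _ _ ha _ eq_refl) as [[[r1 w1] h1] [-> E1]].
    destruct (repl_reach_inr _ _ _ _ _ _ hb _ eq_refl) as [[[r2 w2] h2] [-> E2]].
    simpl in *. subst. tauto.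
Qed.

Lemma rep_exists G f v : exists r, reach G v r /\ isrep G f r.
Proof.
  assert (H : forall n y, reach G v y -> f y = n -> exists r, reach G v r /\ isrep G f r).
  { intro n. induction n as [n IH] using lt_wf_ind. intros y Hy Hfy.
    destruct (classic (exists y', reach G v y' /\ f y' < n)) as [[y' [Hy' Hlt]]|Hno].
    - exact (IH _ Hlt y' Hy' eq_refl).
    - exists y. split; auto. intros z Hz. subst n. destruct (le_lt_dec (f y) (f z)); auto.
      exfalso; apply Hno; exists z; split; auto. eapply rt_trans; eauto. }
  exact (H _ v (rt_refl _ _ _) eq_refl).
Qed.

Lemma rep_unique G f (finj : forall x y, f x = f y -> x = y) r r' : isrep G f r -> isrep G f r' -> reach G r r' -> r = r'.
Proof. intros H1 H2 H. apply finj. apply Nat.le_antisymm; [apply H1; auto | apply H2; apply reach_sym; auto]. Qed.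

Lemma repl_sibling G f P X (finj : forall x y, f x = f y -> x = y) (Hinv : forall u v, reach G u v -> P u -> P v) (x0 : vert X)
  (Hsib : forall v, P v -> equimorphic (component G v) X) : equimorphic (Repl G f P X) G.
Proof.
  destruct (choice_fun _ (rep_exists G f)) as [rep Hrep].
  assert (He0 : forall r, exists e : vert G -> vert X, P r -> forall a b, reach G r a -> reach G r b ->
     (e a = e b -> a = b) /\ (adj G a b <-> adj X (e a) (e b))).
  { intro r. destruct (classic (P r)) as [Pr|nPr]; [| exists (fun _ => x0); intro; contradiction].
    destruct (Hsib r Pr) as [[k [kinj kadj]] _].
    exists (fun a => match excluded_middle_informative (reach G r a) with left h => k (exist _ a h) | right _ => x0 end).
    intros _ a b ha hb.
    destruct (excluded_middle_informative (reach G r a)) as [ha'|]; [|contradiction].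
    destruct (excluded_middle_informative (reach G r b)) as [hb'|]; [|contradiction].
    split.
    - intro E. apply kinj in E. exact (f_equal (@proj1_sig _ _) E).
    - exact (kadj (exist _ a ha') (exist _ b hb')). }
  destruct (choice_fun _ He0) as [e He].
  assert (Hk0 : forall r, exists k : vert X -> vert G, P r -> (forall w w', k w = k w' -> w = w') /\
      (forall w w', adj X w w' <-> adj G (k w) (k w')) /\ (forall w, reach G r (k w))).
  { intro r. destruct (classic (P r)) as [Pr|nPr]; [| exists (fun _ => r); intro; contradiction].
    destruct (Hsib r Pr) as [_ [k0 [k0inj k0adj]]].
    exists (fun w => proj1_sig (k0 w)). intros _. split; [|split].
    - intros w w' E. apply k0inj. apply sig_eq. exact E.
    - intros w w'. exact (k0adj w w').
    - intro w. exact (proj2_sig (k0 w)). }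
  destruct (choice_fun _ Hk0) as [k Hk].
  assert (Hkr : forall r, P r -> forall w, reach G r (k r w)) by (intros r Pr; apply (Hk r Pr)).
  assert (Hki : forall r, P r -> forall w w', k r w = k r w' -> w = w') by (intros r Pr; apply (Hk r Pr)).
  assert (Hka : forall r, P r -> forall w w', adj X w w' <-> adj G (k r w) (k r w')) by (intros r Pr; apply (Hk r Pr)).
  split.
  -
    exists (fun z : RV G f P X => match z with inl u => proj1_sig u | inr q => k (fst (proj1_sig q)) (snd (proj1_sig q)) end).
    split.
    + intros [[u hu]|[[r w] [Pr Rr]]] [[u' hu']|[[r' w'] [Pr' Rr']]]; simpl; intro E.
      * f_equal. apply sig_eq. exact E.
      * exfalso. apply hu. apply (Hinv r' u); [rewrite E; apply (Hkr r' Pr')| exact Pr'].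
      * exfalso. apply hu'. apply (Hinv r u'); [rewrite <- E; apply (Hkr r Pr)| exact Pr].
      * assert (r = r').
        { apply (rep_unique G f finj r r' Rr Rr').
          eapply rt_trans; [apply (Hkr r Pr)|]. rewrite E. apply reach_sym, (Hkr r' Pr'). }
        subst r'. apply (Hki r Pr) in E. subst w'. f_equal. apply sig_eq. reflexivity.
    + intros [[u hu]|[[r w] [Pr Rr]]] [[u' hu']|[[r' w'] [Pr' Rr']]]; simpl.
      * tauto.
      * split; [tauto|]. intro A. exfalso. apply hu.
        apply (Hinv r' u); [|exact Pr']. eapply rt_trans; [apply (Hkr r' Pr')|]. apply reach_sym, rt_step, A.
      * split; [tauto|]. intro A. exfalso. apply hu'.
        apply (Hinv r u'); [|exact Pr]. eapply rt_trans; [apply (Hkr r Pr)|]. apply rt_step, A.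
      * split.
        -- intros [<- A]. apply (Hka r Pr). exact A.
        -- intro A. assert (r = r').
           { apply (rep_unique G f finj r r' Rr Rr').
             eapply rt_trans; [apply (Hkr r Pr)|]. eapply rt_trans; [apply rt_step, A|]. apply reach_sym, (Hkr r' Pr'). }
           subst r'. split; auto. apply (Hka r Pr). exact A.
  -
    assert (HP : forall v, P v -> P (rep v)) by (intros v Pv; exact (Hinv v (rep v) (proj1 (Hrep v)) Pv)).
    exists (fun v => match excluded_middle_informative (P v) with
      | left hp => inr (exist (fun p => P (fst p) /\ isrep G f (fst p)) (rep v, e (rep v) v) (conj (HP v hp) (proj2 (Hrep v))))
      | right hn => inl (exist (fun v => ~ P v) v hn) end).
    assert (Hsame : forall a b, reach G a b -> rep a = rep b).
    { intros a b Hab. apply (rep_unique G f finj); try apply Hrep.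
      eapply rt_trans; [apply reach_sym, Hrep|]. eapply rt_trans; [exact Hab| apply Hrep]. }
    split.
    + intros a b.
      destruct (excluded_middle_informative (P a)) as [pa|na]; destruct (excluded_middle_informative (P b)) as [pb|nb];
        intro E; try discriminate E.
      * injection E as E1 E2.
        rewrite <- E1 in E2. apply (He (rep a) (HP a pa) a b) in E2; auto.
        apply reach_sym, Hrep. rewrite E1. apply reach_sym, Hrep.
      * injection E as E. exact E.
    + intros a b.
      destruct (excluded_middle_informative (P a)) as [pa|na]; destruct (excluded_middle_informative (P b)) as [pb|nb]; simpl.
      * split.
        -- intro A. pose proof (Hsame a b (rt_step _ _ _ _ A)) as E. split; auto. rewrite <- E.
           apply (He (rep a) (HP a pa) a b); auto. apply reach_sym, Hrep. rewrite E. apply reach_sym, Hrep.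
        -- intros [E A]. rewrite <- E in A. apply (He (rep a) (HP a pa) a b) in A; auto.
           apply reach_sym, Hrep. rewrite E. apply reach_sym, Hrep.
      * split; [|tauto]. intro A. apply nb. exact (Hinv a b (rt_step _ _ _ _ A) pa).
      * split; [|tauto]. intro A. apply na. exact (Hinv b a (rt_step _ _ _ _ (adj_sym _ _ _ A)) pb).
      * tauto.
Qed.

Theorem lemma2p2 (G : Graph) (hG : countable_graph G) :
  (exists x : vert G,
     exists F : nat -> Graph,
       (forall n, connected (F n) /\ equimorphic (F n) (component G x)) /\
       (forall m n, m <> n -> ~ isomorphic (F m) (F n))) ->
  (exists F : nat -> Graph,
     (forall n, sibling (F n) G) /\
     (forall m n, m <> n -> ~ isomorphic (F m) (F n))) /\
  (at_least_two_components G ->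
   exists F : nat -> Graph,
     (forall n, sibling (F n) G /\ ~ connected (F n)) /\
     (forall m n, m <> n -> ~ isomorphic (F m) (F n))).
Proof.
  intros [x [F [HF Hnon]]].
  destruct hG as [f finj].
  assert (Part2 : at_least_two_components G -> exists F' : nat -> Graph,
     (forall n, sibling (F' n) G /\ ~ connected (F' n)) /\ (forall m n, m <> n -> ~ isomorphic (F' m) (F' n))).
  { intros [a [b Hab]].
    assert (Hx0 : forall n, exists w : vert (F n), True) by (intro n; destruct (proj1 (HF n)) as [[w] _]; exists w; auto).
    pose (x0 := fun n => proj1_sig (constructive_indefinite_description _ (Hx0 n))).
    pose (S := fun n => ~ exists v, ~ reach G x v /\ isomorphic (component G v) (F n)).
    destruct (classic (forall N, exists n, N <= n /\ S n)) as [Sinf|Sfin].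
    - destruct (choice_fun _ Sinf) as [c Hc].
      pose (s := fix s k := match k with 0 => c 0 | Datatypes.S k => c (s k + 1) end).
      assert (Hs1 : forall k, s k < s (Datatypes.S k)) by (intro k; simpl; pose proof (proj1 (Hc (s k + 1))); lia).
      assert (Hs2 : forall m n, m < n -> s m < s n).
      { intros m n; induction n; intro H; [lia|]. destruct (Nat.eq_dec m n); [subst; apply Hs1|].
        pose proof (Hs1 n); pose proof (IHn ltac:(lia)); lia. }
      assert (Hsinj : forall m n, m <> n -> s m <> s n).
      { intros m n H. destruct (Nat.lt_gt_cases m n) as [[H1|H1] _]; auto;
        [pose proof (Hs2 _ _ H1)|pose proof (Hs2 _ _ H1)]; lia. }
      assert (HS : forall k, S (s k)) by (intro k; destruct k; simpl; apply Hc).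
      pose (P1 := fun v => reach G x v).
      assert (Hinv : forall u v, reach G u v -> P1 u -> P1 v) by (intros u v H1 H2; eapply rt_trans; eauto).
      destruct (rep_exists G f x) as [r [Hxr Rr]].
      exists (fun k => Repl G f P1 (F (s k))). split.
      + intro k. split.
        * apply (repl_sibling G f P1 (F (s k)) finj Hinv (x0 (s k))).
          intros v Hv. eapply equi_trans; [apply equi_of_iso, comp_reach_iso, reach_sym, Hv|].
          apply equi_sym, HF.
        * intros [_ Hc'].
          assert (Hv : exists v, ~ reach G x v).
          { destruct (classic (reach G x a)) as [Ha|Ha]; [|eauto].
            destruct (classic (reach G x b)) as [Hb|Hb]; [|eauto].
            exfalso; apply Hab. eapply rt_trans; [apply reach_sym, Ha| exact Hb]. }
          destruct Hv as [v Hv].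
          pose proof (Hc' (inl (exist (fun v => ~ P1 v) v Hv))
             (inr (exist (fun p => P1 (fst p) /\ isrep G f (fst p)) (r, x0 (s k)) (conj Hxr Rr)))) as R.
          destruct (repl_reach_inl _ _ _ _ _ _ R _ eq_refl) as [? [E _]]. discriminate E.
      + intros m n Hmn I.
        assert (H1 : hasComp (F (s m)) (Repl G f P1 (F (s m)))).
        { exists (inr (exist (fun p => P1 (fst p) /\ isrep G f (fst p)) (r, x0 (s m)) (conj Hxr Rr))).
          apply comp_inr, HF. }
        destruct (hasComp_iso _ _ _ I H1) as [[u|q] Hz].
        * apply (HS m). exists (proj1_sig u). split; [exact (proj2_sig u)|].
          eapply iso_trans; [apply iso_sym, comp_inl, Hinv| exact Hz].
        * apply (Hnon (s n) (s m)); [apply not_eq_sym, Hsinj, Hmn|].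
          eapply iso_trans; [apply iso_sym, comp_inr, HF| exact Hz].
    - assert (HN : exists N, forall n, N <= n -> exists v, isomorphic (component G v) (F n)).
      { apply not_all_ex_not in Sfin. destruct Sfin as [N HN]. exists N. intros n Hn.
        destruct (classic (S n)) as [Sn|Sn]; [exfalso; apply HN; eauto|].
        apply NNPP in Sn. destruct Sn as [v [_ Hv]]. eauto. }
      destruct HN as [N HN].
      pose (P2 := fun n v => isomorphic (component G v) (F n)).
      assert (Hinv : forall n u v, reach G u v -> P2 n u -> P2 n v)
        by (intros n u v H1 H2; eapply iso_trans; [apply iso_sym, comp_reach_iso, H1| exact H2]).
      exists (fun k => Repl G f (P2 (N + k)) (F (Datatypes.S (N + k)))). split.
      + intro k. split.
        * apply (repl_sibling G f _ _ finj (Hinv _) (x0 _)).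
          intros v Hv. eapply equi_trans; [apply equi_of_iso, Hv|].
          eapply equi_trans; [apply HF| apply equi_sym, HF].
        * intros [_ Hc'].
          destruct (HN (Datatypes.S (N + k)) ltac:(lia)) as [v1 H1].
          destruct (HN (Datatypes.S (Datatypes.S (N + k))) ltac:(lia)) as [v2 H2].
          assert (n1 : ~ P2 (N + k) v1).
          { intro H. apply (Hnon (Datatypes.S (N + k)) (N + k)); [lia|]. eapply iso_trans; [apply iso_sym, H1| exact H]. }
          assert (n2 : ~ P2 (N + k) v2).
          { intro H. apply (Hnon (Datatypes.S (Datatypes.S (N + k))) (N + k)); [lia|]. eapply iso_trans; [apply iso_sym, H2| exact H]. }
          pose proof (Hc' (inl (exist (fun v => ~ P2 (N + k) v) v1 n1)) (inl (exist (fun v => ~ P2 (N + k) v) v2 n2))) as R.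
          destruct (repl_reach_inl _ _ _ _ _ _ R _ eq_refl) as [w [E Rw]].
          injection E as E. simpl in Rw. rewrite <- E in Rw.
          apply (Hnon (Datatypes.S (N + k)) (Datatypes.S (Datatypes.S (N + k)))); [lia|].
          eapply iso_trans; [apply iso_sym, H1|]. eapply iso_trans; [apply comp_reach_iso, Rw| exact H2].
      + intros m n Hmn I.
        destruct (HN (N + n) ltac:(lia)) as [v Hv].
        assert (nv : ~ P2 (N + m) v).
        { intro H. apply (Hnon (N + n) (N + m)); [lia|]. eapply iso_trans; [apply iso_sym, Hv| exact H]. }
        assert (H1 : hasComp (F (N + n)) (Repl G f (P2 (N + m)) (F (Datatypes.S (N + m))))).
        { exists (inl (exist (fun v => ~ P2 (N + m) v) v nv)).
          eapply iso_trans; [apply comp_inl, Hinv| exact Hv]. }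
        destruct (hasComp_iso _ _ _ I H1) as [[u|q] Hz].
        * apply (proj2_sig u). 
          eapply iso_trans; [apply iso_sym, comp_inl, Hinv| exact Hz].
        * apply (Hnon (Datatypes.S (N + n)) (N + n)); [lia|].
          eapply iso_trans; [apply iso_sym, comp_inr, HF| exact Hz]. }
  split; [|exact Part2].
  destruct (classic (at_least_two_components G)) as [H2|H2].
  - destruct (Part2 H2) as [F' [H1 H3]]. exists F'. split; [intro n; apply H1 | exact H3].
  - exists F. split; [|exact Hnon]. intro n.
    assert (Hall : forall a b, reach G a b) by (intros a b; apply NNPP; intro; apply H2; exists a, b; auto).
    unfold sibling. eapply equi_trans; [apply (HF n)| apply equi_of_iso, comp_all; auto].
Qed.
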